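(* Let $t_{\mathrm m},t_{\mathrm b}\ge 1$, $t_{\mathrm{msg}}\ge 0$ and $t_{\mathrm{cut}}$ be integers with $t_{\mathrm{cut}}>\max\{t_{\mathrm m},t_{\mathrm b},t_{\mathrm{msg}}\}$, and let $p_{\mathrm m},p_{\mathrm b}\in(0,1)$. Let $M_1,M_2,M_b$ be independent random variables with $\mathbb P(M_1=j)=\mathbb P(M_2=j)=p_{\mathrm m}(1-p_{\mathrm m})^{j-1}$ and $\mathbb P(M_b=j)=p_{\mathrm b}(1-p_{\mathrm b})^{j-1}$ for $j\in\{1,2,\dots\}$, and put $X_1=t_{\mathrm m}M_1$, $X_2=t_{\mathrm m}M_2$, $X_b=t_{\mathrm b}M_b$, $X_{\max}=\max\{X_1,X_2,X_b\}$, $X_{\min}=\min\{X_1,X_2,X_b\}$. Let $Y=1$ if $X_{\max}-X_{\min}<t_{\mathrm{cut}}$ and $Y=0$ otherwise, let $p=\mathbb P(Y=1)$, and let $$Z=\begin{cases}X_{\max}+t_{\mathrm{msg}}, & Y=1,\\ X_{\min}+t_{\mathrm{cut}}, & Y=0.\end{cases}$$ Let $(Y^{(i)},Z^{(i)})_{i\ge1}$ be i.i.d. copies of $(Y,Z)$, let $N=\min\{i\ge1: Y^{(i)}=1\}$ and $X_{\mathrm{e2e}}=\sum_{i=1}^{N}Z^{(i)}$. For $i,j\in\{1,2,b\}$ define the events $A_i^+=\{X_{\max}=X_i,\ X_{\max}-X_{\min}<t_{\mathrm{cut}}\}$, $A_i^-=\{X_{\max}=X_i,\ X_{\max}-X_{\min}\ge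 t_{\mathrm{cut}}\}$, $A_{ij}^-=\{X_{\max}=X_i,\ X_{\min}=X_j,\ X_{\max}-X_{\min}\ge t_{\mathrm{cut}}\}$, and write juxtaposition of events for their intersection (e.g. $A_1^+A_2^+=A_1^+\cap A_2^+$, $A_{12}^-A_{1b}^-=A_{12}^-\cap A_{1b}^-$). Then $$\mathbb E(X_{\mathrm{e2e}})=\frac{\mathbb E(Z\mathbf 1_{Y=0})+\mathbb E(Z\mathbf 1_{Y=1})}{p},$$ where $$\mathbb E(Z\mathbf 1_{Y=1})=2\mathbb E(Z\mathbf 1_{A_1^+})+\mathbb E(Z\mathbf 1_{A_b^+})-\mathbb E(Z\mathbf 1_{A_1^+A_2^+})-2\mathbb E(Z\mathbf 1_{A_1^+A_b^+})+\mathbb E(Z\mathbf 1_{A_1^+A_2^+A_b^+}),$$ $$\mathbb E(Z\mathbf 1_{Y=0})=2\big(\mathbb E(Z\mathbf 1_{A_{12}^-})+\mathbb E(Z\mathbf 1_{A_{1b}^-})+\mathbb E(Z\mathbf 1_{A_{b1}^-})\big)-2\mathbb E(Z\mathbf 1_{A_{12}^-A_{1b}^-})-\mathbb E(Z\mathbf 1_{A_{b1}^-A_{b2}^-})-\mathbb E(Z\mathbf 1_{A_1^-A_2^-})-2\mathbb E(Z\mathbf 1_{A_1^-A_b^-}).$$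
   Context: This models end-to-end entanglement generation in a chain of three elementary links (two identical metropolitan links 1, 2 and a backbone link b) with a global cut-off: in each round, $X_1,X_2,X_b$ are the times at which the three elementary links are first generated; the round succeeds ($Y=1$) iff all three are generated within a window shorter than $t_{\mathrm{cut}}$; a successful round lasts $X_{\max}+t_{\mathrm{msg}}$ and a failed round lasts $X_{\min}+t_{\mathrm{cut}}$; rounds are repeated independently until the first success, and $X_{\mathrm{e2e}}$ is the total time until a successful end-to-end link. *)

(* Defs.v *)
From HB Require Import structures.
From mathcomp Require Import all_boot all_order all_algebra.
From mathcomp Require Import all_classical all_reals all_analysis.
Set Implicit Arguments. Unset Strict Implicit. Unset Printing Implicit Defensive.
Import Order.TTheory GRing.Theory Num.Theory.
Local Open Scope classical_set_scope.
Local Open Scope ring_scope.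

Inductive link := L1 | L2 | Lb.

Definition link_eqb (a b : link) : bool :=
  match a, b with L1, L1 | L2, L2 | Lb, Lb => true | _, _ => false end.
Lemma link_eqP : Equality.axiom link_eqb.
Proof. by case; case; constructor. Qed.
HB.instance Definition _ := hasDecEq.Build link link_eqP.

Definition mutually_independent {d} {T : measurableType d} {R : realType}
  (P : probability T R) {I : eqType} {V : Type} (X : I -> T -> V) : Prop :=
  forall (s : seq I) (B : I -> set V), uniq s ->
    P (\bigcap_(i in [set` s]) (X i @^-1` B i)) =
    (\prod_(i <- s) P (X i @^-1` B i))%E.

Definition Mof {T : Type} (M1 M2 Mb : T -> nat) (l : link) : T -> nat :=
  match l with L1 => M1 | L2 => M2 | Lb => Mb end.

Definition Xof {T : Type} (tm tb : nat) (M1 M2 Mb : T -> nat) (l : link) (x : T) : nat :=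
  match l with L1 => tm * M1 x | L2 => tm * M2 x | Lb => tb * Mb x end.

Definition Xmax {T : Type} (X : link -> T -> nat) (x : T) : nat :=
  maxn (X L1 x) (maxn (X L2 x) (X Lb x)).
Definition Xmin {T : Type} (X : link -> T -> nat) (x : T) : nat :=
  minn (X L1 x) (minn (X L2 x) (X Lb x)).

Definition Yof {T : Type} (tcut : nat) (X : link -> T -> nat) (x : T) : nat :=
  if (Xmax X x - Xmin X x < tcut)%N then 1%N else 0%N.

Definition Zof {T : Type} (tcut tmsg : nat) (X : link -> T -> nat) (x : T) : nat :=
  if Yof tcut X x == 1%N then (Xmax X x + tmsg)%N else (Xmin X x + tcut)%N.

Definition Aplus {T : Type} (tcut : nat) (X : link -> T -> nat) (i : link) : set T :=
  [set x | Xmax X x = X i x /\ (Xmax X x - Xmin X x < tcut)%N].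
Definition Aminus {T : Type} (tcut : nat) (X : link -> T -> nat) (i : link) : set T :=
  [set x | Xmax X x = X i x /\ (tcut <= Xmax X x - Xmin X x)%N].
Definition Aminus2 {T : Type} (tcut : nat) (X : link -> T -> nat) (i j : link) : set T :=
  [set x | Xmax X x = X i x /\ Xmin X x = X j x /\ (tcut <= Xmax X x - Xmin X x)%N].

Definition EZ {d} {T : measurableType d} {R : realType} (P : probability T R)
  (F : T -> nat) (A : set T) : \bar R :=
  (\int[P]_(x in A) ((F x)%:R : R)%:E)%E.

(* C i = (Y^(i+1), Z^(i+1)) (0-based indexing of the copies).
   X_e2e = sum_{i=1}^N Z^(i), written as the sum of all Z^(i) with
   i <= N, i.e. with Y^(k) = 0 for all k < i (this is +oo if N = oo). *)
Definition Xe2e {T : Type} {R : realType} (C : nat -> T -> nat * nat) (x : T) : \bar R :=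
  (\sum_(0 <= i <oo)
     (if all (fun k => (C k x).1 == 0%N) (iota 0 i)
      then (((C i x).2)%:R : R) else 0)%:E)%E.

(* Main.v *)
Require Import Defs.
From HB Require Import structures.
From mathcomp Require Import all_boot all_order all_algebra.
From mathcomp Require Import all_classical all_reals all_analysis.
From mathcomp Require Import measurable_realfun.
From mathcomp Require Import zify ring lra.
Import Order.TTheory GRing.Theory Num.Theory.
Import numFieldNormedType.Exports.
Local Open Scope classical_set_scope.
Local Open Scope ring_scope.

Section Gen.
Context (R : realType) (d : measure_display) (T : measurableType d) (P : probability T R).
Local Open Scope ereal_scope.

Lemma mcst_set (Q : Prop) : measurable [set _ : T | Q].
Proof.
have [q|nq] := pselect Q.
  by rewrite (_ : [set _ | Q] = setT) //; apply/seteqP; split.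
by rewrite (_ : [set _ | Q] = set0) //; apply/seteqP; split.
Qed.

Lemma integral_part (U : T -> nat) (D : set T) (f : T -> \bar R) :
  (forall k, measurable (U @^-1` [set k])) -> measurable D -> measurable_fun D f ->
  (forall x, D x -> 0 <= f x) ->
  \int[P]_(x in D) f x = \sum_(k <oo) \int[P]_(x in D `&` U @^-1` [set k]) f x.
Proof.
move=> mU mD mf f0.
have DE : D = \bigcup_k (D `&` U @^-1` [set k]).
  by apply/seteqP; split => [x Dx|x [k _ []//]]; exists (U x).
rewrite {1}DE; apply: ge0_integral_bigcup.
- by move=> k; apply: measurableI.
- by rewrite -DE.
- by rewrite -DE.
- by move=> i j _ _ [x [[_ /= <-] [_ /= ->]]].
Qed.

Context (M1 M2 Mb : T -> nat).
Hypothesis hM : forall (l : link) (v : nat), measurable (Mof M1 M2 Mb l @^-1` [set v]).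

Definition tri (x : T) : nat * nat * nat := (M1 x, M2 x, Mb x).

Lemma mtri (A : set (nat * nat * nat)) : measurable (tri @^-1` A).
Proof.
have -> : tri @^-1` A = \bigcup_a \bigcup_b \bigcup_c
   (M1 @^-1` [set a] `&` M2 @^-1` [set b] `&` Mb @^-1` [set c] `&` [set _ | A (a,b,c)]).
  apply/seteqP; split => x /=.
    by move=> Ax; exists (M1 x) => //; exists (M2 x) => //; exists (Mb x).
  by move=> [a _ [b _ [c _ [[[<- <-] <-] ]]]].
apply: bigcupT_measurable => a; apply: bigcupT_measurable => b; apply: bigcupT_measurable => c.
apply: measurableI; last exact: mcst_set.
by repeat apply: measurableI; [exact: (hM L1 a)|exact: (hM L2 b)|exact: (hM Lb c)].
Qed.

Lemma mtri_fun (D : set T) (F : nat * nat * nat -> \bar R) :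
  measurable D -> measurable_fun D (fun x => F (tri x)).
Proof. by move=> mD _ Y _; apply: measurableI => //; exact: (mtri (F @^-1` Y)). Qed.


Hypothesis hI : mutually_independent P (Mof M1 M2 Mb).

Definition m1 a := P (M1 @^-1` [set a]).
Definition m2 a := P (M2 @^-1` [set a]).
Definition mb a := P (Mb @^-1` [set a]).

Lemma indep3 a b c :
  P (M1 @^-1` [set a] `&` M2 @^-1` [set b] `&` Mb @^-1` [set c]) = m1 a * m2 b * mb c.
Proof.
have := hI [:: L1; L2; Lb]
  (fun l => [set (match l with L1 => a | L2 => b | Lb => c end)]) isT.
rewrite !big_cons big_nil mule1 muleA => <-; congr (P _).
apply/seteqP; split => x /=.
  by move=> [[h1 h2] h3] [] _ /=.
move=> H; split; [split|].
- exact: (H L1).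
- exact: (H L2).
- exact: (H Lb).
Qed.

Lemma mfib1 k : measurable (M1 @^-1` [set k]). Proof. exact: (hM L1). Qed.
Lemma mfib2 k : measurable (M2 @^-1` [set k]). Proof. exact: (hM L2). Qed.
Lemma mfibb k : measurable (Mb @^-1` [set k]). Proof. exact: (hM Lb). Qed.
Hint Resolve mfib1 mfib2 mfibb : core.

Lemma repr_gen (U1 U2 : T -> nat) (h : nat * nat * nat -> \bar R) (g : nat -> nat -> nat -> nat * nat * nat) :
  (forall k, measurable (U1 @^-1` [set k])) ->
  (forall k, measurable (U2 @^-1` [set k])) ->
  (forall t, 0 <= h t) ->
  (forall a b c x, U1 x = a -> U2 x = b -> Mb x = c -> tri x = g a b c) ->
  \int[P]_x h (tri x) = \sum_(a <oo) \sum_(b <oo) \sum_(c <oo)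
     h (g a b c) * P (setT `&` U1 @^-1` [set a] `&` U2 @^-1` [set b] `&` Mb @^-1` [set c]).
Proof.
move=> mU1 mU2 h0 hg.
have mI1 a : measurable (setT `&` U1 @^-1` [set a]) by apply: measurableI.
have mI2 a b : measurable (setT `&` U1 @^-1` [set a] `&` U2 @^-1` [set b]).
  by apply: measurableI.
rewrite (integral_part U1 setT _ mU1 measurableT (mtri_fun _ h measurableT) (fun x _ => h0 _)).
apply: eq_eseriesr => a _.
rewrite (integral_part U2 _ _ mU2 (mI1 a) (mtri_fun _ h (mI1 a)) (fun x _ => h0 _)).
apply: eq_eseriesr => b _.
rewrite (integral_part Mb _ _ mfibb (mI2 a b) (mtri_fun _ h (mI2 a b)) (fun x _ => h0 _)).
apply: eq_eseriesr => c _.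
rewrite (eq_integral (cst (h (g a b c)))); last first.
  by move=> x; rewrite in_setE => -[[[_ h1] h2] h3]; rewrite /cst (hg a b c x h1 h2 h3).
by rewrite integral_cst; last exact: measurableI (mI2 a b) (mfibb c).
Qed.

Lemma repr12 (h : nat * nat * nat -> \bar R) : (forall t, 0 <= h t) ->
  \int[P]_x h (tri x) = \sum_(a <oo) \sum_(b <oo) \sum_(c <oo)
     h (a, b, c) * (m1 a * m2 b * mb c).
Proof.
move=> h0; rewrite (@repr_gen M1 M2 h (fun a b c => (a, b, c)) mfib1 mfib2 h0); last first.
  by move=> a b c x <- <- <-.
apply: eq_eseriesr => a _; apply: eq_eseriesr => b _; apply: eq_eseriesr => c _.
by rewrite setTI indep3.
Qed.

Lemma repr21 (h : nat * nat * nat -> \bar R) : (forall t, 0 <= h t) ->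
  \int[P]_x h (tri x) = \sum_(b <oo) \sum_(a <oo) \sum_(c <oo)
     h (a, b, c) * (m1 a * m2 b * mb c).
Proof.
move=> h0; rewrite (@repr_gen M2 M1 h (fun b a c => (a, b, c)) mfib2 mfib1 h0); last first.
  by move=> a b c x <- <- <-.
apply: eq_eseriesr => b _; apply: eq_eseriesr => a _; apply: eq_eseriesr => c _.
by rewrite setTI (setIC (M2 @^-1` _)) indep3.
Qed.

Definition sw (t : nat * nat * nat) : nat * nat * nat := (t.1.2, t.1.1, t.2).

Lemma sym12 (h : nat * nat * nat -> \bar R) : (forall t, 0 <= h t) ->
  (forall a, m1 a = m2 a) ->
  \int[P]_x h (sw (tri x)) = \int[P]_x h (tri x).
Proof.
move=> h0 m12.
rewrite (repr12 (fun t => h (sw t)) (fun t => h0 _)) (repr21 h h0).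
apply: eq_eseriesr => a _; apply: eq_eseriesr => b _; apply: eq_eseriesr => c _.
by rewrite -!m12 (muleC (m1 a)).
Qed.

End Gen.
Section Gen2.
Context (R : realType) (d : measure_display) (T : measurableType d) (P : probability T R).
Local Open Scope ereal_scope.

Lemma sum_fib (U : T -> nat) : (forall k, measurable (U @^-1` [set k])) ->
  \sum_(k <oo) P (U @^-1` [set k]) = 1.
Proof.
move=> mU; rewrite -(probability_setT P).
have -> : [set: T] = \bigcup_(k in setT) U @^-1` [set k].
  by apply/seteqP; split => x // _; exists (U x).
rewrite measure_bigcup; last 2 first.
- by move=> k _; exact: mU.
- by move=> i j _ _ [x [/= <- <-]].
by apply: eq_eseriesl => k; rewrite in_setT.
Qed.

Lemma fib0_eq (U V : T -> nat) : (forall k, measurable (U @^-1` [set k])) ->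
  (forall k, measurable (V @^-1` [set k])) ->
  (forall k, (0 < k)%N -> P (U @^-1` [set k]) = P (V @^-1` [set k])) ->
  P (U @^-1` [set 0%N]) = P (V @^-1` [set 0%N]).
Proof.
move=> mU mV hUV.
have sU := sum_fib U mU; have sV := sum_fib V mV.
rewrite (@nneseriesD1 _ _ 0%N) in sU; last 2 first.
- by move=> k _; exact: measure_ge0.
- by [].
rewrite (@nneseriesD1 _ _ 0%N) in sV; last 2 first.
- by move=> k _; exact: measure_ge0.
- by [].
set S := \sum_(0 <= k <oo | true && (k != 0%N)) P (U @^-1` [set k]) in sU.
have SE : \sum_(0 <= k <oo | true && (k != 0%N)) P (V @^-1` [set k]) = S.
  by apply: eq_eseriesr => k /= k0; rewrite hUV // lt0n.
rewrite SE in sV.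
have S0 : 0 <= S by apply: nneseries_ge0 => k _ _; exact: measure_ge0.
have S1 : S <= 1 by rewrite -sU; apply: leeDr; exact: measure_ge0.
have Sf : S \is a fin_num by rewrite ge0_fin_numE // (le_lt_trans S1) // ltry.
by rewrite -(addeK (P (U @^-1` [set 0%N])) Sf) -(addeK (P (V @^-1` [set 0%N])) Sf) sU sV.
Qed.

End Gen2.
Section Ev.
Context (U : Type) (tcut : nat) (X : link -> U -> nat).

Lemma inAp i t : (t \in Aplus tcut X i) = (X i t == Xmax X t) && (Xmax X t - Xmin X t < tcut)%N.
Proof.
apply/idP/idP; rewrite in_setE /Aplus /=.
  by move=> [E H]; rewrite -E eqxx H.
by move=> /andP[/eqP E H]; split; [exact/esym|exact: H].
Qed.

Lemma inAm i t : (t \in Aminus tcut X i) = (X i t == Xmax X t) && ~~ (Xmax X t - Xmin X t < tcut)%N.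
Proof.
apply/idP/idP; rewrite in_setE /Aminus /= -leqNgt.
  by move=> [E H]; rewrite -E eqxx H.
by move=> /andP[/eqP E H]; split; [exact/esym|exact: H].
Qed.

Lemma inAm2 i j t : (t \in Aminus2 tcut X i j) =
  [&& X i t == Xmax X t, X j t == Xmin X t & ~~ (Xmax X t - Xmin X t < tcut)%N].
Proof.
apply/idP/idP; rewrite in_setE /Aminus2 /= -leqNgt.
  by move=> [E [F H]]; rewrite -E -F !eqxx H.
by move=> /and3P[/eqP E /eqP F H]; split; [exact/esym|split; [exact/esym|exact: H]].
Qed.

Lemma inY1 t : (t \in [set t | Yof tcut X t = 1%N]) = (Xmax X t - Xmin X t < tcut)%N.
Proof. by apply/idP/idP; rewrite in_setE /Yof /=; case: ifP. Qed.

Lemma inY0 t : (t \in [set t | Yof tcut X t = 0%N]) = ~~ (Xmax X t - Xmin X t < tcut)%N.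
Proof. by apply/idP/idP; rewrite in_setE /Yof /=; case: ifP. Qed.

Lemma max3 t : [|| X L1 t == Xmax X t, X L2 t == Xmax X t | X Lb t == Xmax X t].
Proof. rewrite /Xmax; lia. Qed.

Lemma min3 t : [|| X L1 t == Xmin X t, X L2 t == Xmin X t | X Lb t == Xmin X t].
Proof. rewrite /Xmin; lia. Qed.

End Ev.

Lemma pw2 (e1 e2 eb c : bool) (z : nat) : [|| e1, e2 | eb] ->
  (c * z + ((e1 && c) && (e2 && c)) * z + ((e1 && c) && (eb && c)) * z
     + ((e2 && c) && (eb && c)) * z =
   (e1 && c) * z + (e2 && c) * z + (eb && c) * z
     + (((e1 && c) && (e2 && c)) && (eb && c)) * z)%N.
Proof. by case: e1 e2 eb c => [] [] [] [] //= _; lia. Qed.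

Lemma closed_form (R : realType) (q : R) n :
  (1 - q) ^+ 2 * (\sum_(0 <= k < n.+1) k%:R * q ^+ k.-1) =
  1 - n.+1%:R * q ^+ n + n%:R * q ^+ n.+1.
Proof.
elim: n => [|n IH].
  rewrite big_nat1 /=. ring.
rewrite big_nat_recr //= mulrDr IH.
rewrite !exprS -!natr1.
ring.
Qed.

Lemma mean_bound (R : realType) (r : R) n : 0 < r < 1 ->
  \sum_(0 <= k < n) k%:R * (r * (1 - r) ^+ k.-1) <= r^-1.
Proof.
move=> /andP[r0 r1].
have -> : \sum_(0 <= k < n) k%:R * (r * (1 - r) ^+ k.-1) =
   r * \sum_(0 <= k < n) k%:R * (1 - r) ^+ k.-1.
  by rewrite mulr_sumr; apply: eq_bigr => k _; rewrite mulrCA.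
set S := \sum_(0 <= k < n) _.
have S0 : 0 <= S by apply: sumr_ge0 => k _; apply: mulr_ge0; [exact: ler0n|apply: exprn_ge0; lra].
have hS : r ^+ 2 * S <= 1.
  case: n @S S0 => [|n] S S0.
    by rewrite /S big_geq // mulr0 ler01.
  have := @closed_form R (1 - r) n; rewrite (_ : 1 - (1 - r) = r); last by ring.
  rewrite /S => ->.
  have Q0 : 0 <= (1 - r) ^+ n by apply: exprn_ge0; lra.
  have N0 : 0 <= n%:R :> R by exact: ler0n.
  have H1 : 0 <= n%:R * r :> R by apply: mulr_ge0; lra.
  rewrite exprS -natr1.
  nra.
have -> : r * S = (r ^+ 2 * S) * r^-1 by field; rewrite gt_eqF.
rewrite -[X in _ <= X]mul1r; apply: ler_wpM2r => //.
by rewrite invr_ge0; lra.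
Qed.

Section MF.
Context (R : realType) (d : measure_display) (T : measurableType d) (P : probability T R).
Local Open Scope ereal_scope.

Lemma natE_ge0 (n : nat) : 0 <= ((n%:R)%:E : \bar R).
Proof. by rewrite lee_fin ler0n. Qed.

Lemma mfun_nat (U : T -> nat) (F : nat -> \bar R) (D : set T) :
  (forall k, measurable (U @^-1` [set k])) -> measurable D ->
  measurable_fun D (fun x => F (U x)).
Proof.
move=> mU mD _ Y mY; apply: measurableI => //.
have -> : (fun x => F (U x)) @^-1` Y = \bigcup_n (U @^-1` [set n] `&` [set _ | Y (F n)]).
  apply/seteqP; split => x /=.
    by move=> Yx; exists (U x).
  by move=> [n _ [/= <-]].
apply: bigcupT_measurable => n; apply: measurableI; [exact: mU|exact: mcst_set].
Qed.

Lemma mean_fin (U : T -> nat) (r : R) : (forall k, measurable (U @^-1` [set k])) ->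
  (0 < r < 1)%R ->
  (forall j, (0 < j)%N -> P (U @^-1` [set j]) = (r * (1 - r) ^+ j.-1)%:E) ->
  \int[P]_x ((U x)%:R)%:E < +oo.
Proof.
move=> mU r01 hU.
rewrite (@integral_part R d T P U setT _ mU measurableT
  (mfun_nat U (fun n => (n%:R)%:E) setT mU measurableT) (fun x _ => _)); last first.
  by move=> x _; exact: natE_ge0.
rewrite (eq_eseriesr (g := fun k => (k%:R * (r * (1 - r) ^+ k.-1))%:E)); last first.
  move=> k _.
  rewrite (eq_integral (cst (k%:R)%:E)); last first.
    by move=> x; rewrite in_setE => -[_ /= ->].
  rewrite integral_cst; last exact: measurableI.
  rewrite setTI; case: k => [|k].
    by rewrite !mul0r mul0e.
  by rewrite EFinM; congr (_ * _); exact: hU.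
apply: (@le_lt_trans _ _ (r^-1)%:E); last exact: ltry.
apply: lime_le.
  by apply: is_cvg_nneseries => n _ _; rewrite lee_fin; apply: mulr_ge0; [exact: ler0n|
    apply: mulr_ge0; [case/andP: r01 => r0 _; exact: ltW|apply: exprn_ge0; case/andP: r01 => _ r1; rewrite subr_ge0 ltW]].
apply: nearW => n; rewrite sumEFin lee_fin.
exact: mean_bound.
Qed.

End MF.

Section JS.
Context (R : realType) (d : measure_display) (T : measurableType d) (P : probability T R).
Context (tm tb tmsg tcut : nat) (M1 M2 Mb : T -> nat).
Hypothesis hM : forall (l : link) (v : nat), measurable (Mof M1 M2 Mb l @^-1` [set v]).
Local Open Scope ereal_scope.

Definition X3 := Xof tm tb (fun t : nat * nat * nat => t.1.1) (fun t => t.1.2) (fun t => t.2).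
Definition Zn t := Zof tcut tmsg X3 t.
Notation tri := (@tri d T M1 M2 Mb).

Definition J (B : set (nat * nat * nat)) : \bar R :=
  \int[P]_x (((tri x \in B) * Zn (tri x))%:R)%:E.

Definition G (s : seq (set (nat * nat * nat))) t : nat := (\sum_(B <- s) (t \in B) * Zn t)%N.

Lemma mnat (F : nat * nat * nat -> nat) : measurable_fun setT (fun x => ((F (tri x))%:R)%:E : \bar R).
Proof. exact: (@mtri_fun R d T M1 M2 Mb hM setT (fun t => ((F t)%:R)%:E) measurableT). Qed.

Lemma nat_ge0 (n : nat) : 0 <= ((n%:R)%:E : \bar R).
Proof. by rewrite lee_fin ler0n. Qed.

Lemma Jsum s : \sum_(B <- s) J B = \int[P]_x ((G s (tri x))%:R)%:E.
Proof.
elim: s => [|B s IH].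
  by rewrite big_nil; apply/esym/integral0_eq => x _; rewrite /G big_nil.
rewrite big_cons IH /J.
rewrite -(@ge0_integralD _ _ _ P setT measurableT); last 4 first.
- by move=> x _; exact: nat_ge0.
- exact: (mnat (fun t => ((t \in B) * Zn t)%N)).
- by move=> x _; exact: nat_ge0.
- exact: (mnat (G s)).
by apply: eq_integral => x _; rewrite /G big_cons natrD EFinD.
Qed.

Lemma Jeq s1 s2 : (forall t, G s1 t = G s2 t) -> \sum_(B <- s1) J B = \sum_(B <- s2) J B.
Proof. by move=> h; rewrite !Jsum; apply: eq_integral => x _; rewrite h. Qed.


Lemma Xmax_sw t : Xmax X3 (sw t) = Xmax X3 t.
Proof. rewrite /Xmax /X3 /Xof /sw /=; lia. Qed.
Lemma Xmin_sw t : Xmin X3 (sw t) = Xmin X3 t.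
Proof. rewrite /Xmin /X3 /Xof /sw /=; lia. Qed.
Lemma Zn_sw t : Zn (sw t) = Zn t.
Proof. by rewrite /Zn /Zof /Yof Xmax_sw Xmin_sw. Qed.

Hypothesis hI : mutually_independent P (Mof M1 M2 Mb).
Hypothesis m12 : forall a, P (M1 @^-1` [set a]) = P (M2 @^-1` [set a]).

Lemma Jsym B1 B2 : (forall t, (sw t \in B1) = (t \in B2)) -> J B2 = J B1.
Proof.
move=> hB; rewrite /J -(@sym12 R d T P M1 M2 Mb hM hI
   (fun t => (((t \in B1) * Zn t)%:R)%:E)); last 2 first.
- by move=> t; exact: nat_ge0.
- exact: m12.
by apply: eq_integral => x _; rewrite hB Zn_sw.
Qed.

Definition IZ := \int[P]_x ((Zn (tri x))%:R)%:E.

Lemma Jle B : J B <= IZ.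
Proof.
apply: (@ge0_le_integral _ _ _ P setT measurableT); last first.
- by move=> x _; rewrite lee_fin ler_nat; case: (_ \in _); rewrite ?mul1n ?mul0n.
- exact: (mnat (fun t => Zn t)).
- exact: (mnat (fun t => ((t \in B) * Zn t)%N)).
- by move=> x _; exact: nat_ge0.
Qed.

Lemma Jge0 B : 0 <= J B.
Proof. by apply: integral_ge0 => x _; exact: nat_ge0. Qed.

Lemma Jreal B : IZ < +oo -> exists r : R, J B = r%:E.
Proof.
move=> hZ; exists (fine (J B)); rewrite fineK // ge0_fin_numE ?Jge0 //.
exact: le_lt_trans (Jle B) hZ.
Qed.


Hypothesis hZ : IZ < +oo.
Hypothesis htc : (0 < tcut)%N.

Notation Ap := (Aplus tcut X3).
Notation Am := (Aminus tcut X3).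
Notation Am2 := (Aminus2 tcut X3).
Definition Y1s := [set t : nat * nat * nat | Yof tcut X3 t = 1%N].
Definition Y0s := [set t : nat * nat * nat | Yof tcut X3 t = 0%N].

Lemma part2 : J Y1s = 2%:E * J (Ap L1) + J (Ap Lb) - J (Ap L1 `&` Ap L2)
       - 2%:E * J (Ap L1 `&` Ap Lb) + J (Ap L1 `&` Ap L2 `&` Ap Lb).
Proof.
have pw : forall t, G [:: Y1s; Ap L1 `&` Ap L2; Ap L1 `&` Ap Lb; Ap L2 `&` Ap Lb] t =
     G [:: Ap L1; Ap L2; Ap Lb; Ap L1 `&` Ap L2 `&` Ap Lb] t.
  move=> t; rewrite /G !big_cons !big_nil (in_setI t (Ap L1 `&` Ap L2)).
  rewrite !(in_setI t (Aplus _ _ _)) !inAp /Y1s inY1.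
  have := @max3 _ X3 t.
  move: (X3 L1 t == _) (X3 L2 t == _) (X3 Lb t == _) (_ - _ < tcut)%N (Zn t) => e1 e2 eb c z.
  by case: e1 e2 eb c => [] [] [] [] //= _; lia.
have := Jeq _ _ pw; rewrite !big_cons !big_nil !adde0 => H.
rewrite (@Jsym (Ap L1) (Ap L2)) in H; last first.
  by move=> t; rewrite !inAp Xmax_sw Xmin_sw.
rewrite (@Jsym (Ap L1 `&` Ap Lb) (Ap L2 `&` Ap Lb)) in H; last first.
  by move=> t; rewrite !(in_setI _ (Aplus _ _ _)) !inAp Xmax_sw Xmin_sw.
have [y Ey] := Jreal Y1s hZ.
have [a Ea] := Jreal (Ap L1) hZ.
have [b Eb] := Jreal (Ap Lb) hZ.
have [c Ec] := Jreal (Ap L1 `&` Ap L2) hZ.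
have [e Ee] := Jreal (Ap L1 `&` Ap Lb) hZ.
have [f Ef] := Jreal (Ap L1 `&` Ap L2 `&` Ap Lb) hZ.
rewrite Ey Ea Eb Ec Ee Ef in H *.
rewrite -!EFinD in H; have H2 := EFin_inj H.
have -> : 2%:E * a%:E + b%:E - c%:E - 2%:E * e%:E + f%:E =
  (2 * a + b - c - 2 * e + f)%:E :> \bar R by [].
congr (_%:E); lra.
Qed.


Lemma ex_eg i t : ~~ (Xmax X3 t - Xmin X3 t < tcut)%N ->
  ~~ ((X3 i t == Xmax X3 t) && (X3 i t == Xmin X3 t)).
Proof. move: (X3 i t) (Xmax X3 t) (Xmin X3 t) => x a b; lia. Qed.

Lemma part3 : J Y0s = 2%:E * (J (Am2 L1 L2) + J (Am2 L1 Lb) + J (Am2 Lb L1))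
       - 2%:E * J (Am2 L1 L2 `&` Am2 L1 Lb) - J (Am2 Lb L1 `&` Am2 Lb L2)
       - J (Am L1 `&` Am L2) - 2%:E * J (Am L1 `&` Am Lb).
Proof.
have pw : forall t, G [:: Y0s; Am2 L1 L2 `&` Am2 L1 Lb; Am2 L2 L1 `&` Am2 L2 Lb;
        Am2 Lb L1 `&` Am2 Lb L2; Am L1 `&` Am L2; Am L1 `&` Am Lb; Am L2 `&` Am Lb] t =
     G [:: Am2 L1 L2; Am2 L1 Lb; Am2 Lb L1; Am2 L2 L1; Am2 L2 Lb; Am2 Lb L2] t.
  move=> t; rewrite /G !big_cons !big_nil.
  rewrite !(in_setI t (Aminus2 _ _ _ _)) !(in_setI t (Aminus _ _ _)) !inAm2 !inAm /Y0s inY0.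
  have := @max3 _ X3 t; have := @min3 _ X3 t.
  have := ex_eg L1 t; have := ex_eg L2 t; have := ex_eg Lb t.
  move: (X3 L1 t == Xmax X3 t) (X3 L2 t == Xmax X3 t) (X3 Lb t == Xmax X3 t)
        (X3 L1 t == Xmin X3 t) (X3 L2 t == Xmin X3 t) (X3 Lb t == Xmin X3 t)
        (_ - _ < tcut)%N (Zn t) => e1 e2 eb g1 g2 gb c z.
  by case: e1 e2 eb g1 g2 gb c => [] [] [] [] [] [] [] //= *; lia.
have := Jeq _ _ pw; rewrite !big_cons !big_nil !adde0 => H.
rewrite (@Jsym (Am2 L1 L2) (Am2 L2 L1)) in H; last first.
  by move=> t; rewrite !inAm2 Xmax_sw Xmin_sw.
rewrite (@Jsym (Am2 L1 Lb) (Am2 L2 Lb)) in H; last first.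
  by move=> t; rewrite !inAm2 Xmax_sw Xmin_sw.
rewrite (@Jsym (Am2 Lb L1) (Am2 Lb L2)) in H; last first.
  by move=> t; rewrite !inAm2 Xmax_sw Xmin_sw.
rewrite (@Jsym (Am2 L1 L2 `&` Am2 L1 Lb) (Am2 L2 L1 `&` Am2 L2 Lb)) in H; last first.
  by move=> t; rewrite !(in_setI _ (Aminus2 _ _ _ _)) !inAm2 Xmax_sw Xmin_sw.
rewrite (@Jsym (Am L1 `&` Am Lb) (Am L2 `&` Am Lb)) in H; last first.
  by move=> t; rewrite !(in_setI _ (Aminus _ _ _)) !inAm Xmax_sw Xmin_sw.
have [y Ey] := Jreal Y0s hZ.
have [a Ea] := Jreal (Am2 L1 L2) hZ.
have [b Eb] := Jreal (Am2 L1 Lb) hZ.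
have [c Ec] := Jreal (Am2 Lb L1) hZ.
have [e Ee] := Jreal (Am2 L1 L2 `&` Am2 L1 Lb) hZ.
have [f Ef] := Jreal (Am2 Lb L1 `&` Am2 Lb L2) hZ.
have [g Eg] := Jreal (Am L1 `&` Am L2) hZ.
have [h Eh] := Jreal (Am L1 `&` Am Lb) hZ.
rewrite Ey Ea Eb Ec Ee Ef Eg Eh in H *.
rewrite -!EFinD in H; have H2 := EFin_inj H.
have -> : 2%:E * (a%:E + b%:E + c%:E) - 2%:E * e%:E - f%:E - g%:E - 2%:E * h%:E =
  (2 * (a + b + c) - 2 * e - f - g - 2 * h)%:E :> \bar R by [].
congr (_%:E); lra.
Qed.

End JS.

Lemma Zn_bound tm tb tmsg tcut t :
  (Zn tm tb tmsg tcut t <= (tm + tb + tcut + tmsg) * (t.1.1 + t.1.2 + t.2 + 1))%N.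
Proof.
rewrite /Zn /Zof /Yof; case: ifP => _; rewrite /Xmax /Xmin /X3 /Xof /=; nia.
Qed.

Section KS.
Context (R : realType) (d : measure_display) (T : measurableType d) (P : probability T R).
Context (tm tb tmsg tcut : nat) (M1 M2 Mb : T -> nat).
Hypothesis hM : forall (l : link) (v : nat), measurable (Mof M1 M2 Mb l @^-1` [set v]).
Context (pm pb : R).
Hypothesis pm01 : 0 < pm < 1.
Hypothesis pb01 : 0 < pb < 1.
Hypothesis hg1 : forall j, (0 < j)%N -> P (M1 @^-1` [set j]) = (pm * (1 - pm) ^+ j.-1)%:E.
Hypothesis hg2 : forall j, (0 < j)%N -> P (M2 @^-1` [set j]) = (pm * (1 - pm) ^+ j.-1)%:E.
Hypothesis hgb : forall j, (0 < j)%N -> P (Mb @^-1` [set j]) = (pb * (1 - pb) ^+ j.-1)%:E.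
Local Open Scope ereal_scope.
Notation tri := (@tri d T M1 M2 Mb).

Lemma mnat' (F : nat * nat * nat -> \bar R) : measurable_fun setT (fun x => F (tri x)).
Proof. exact: (@mtri_fun R d T M1 M2 Mb hM setT F measurableT). Qed.

Lemma IZ_fin : @IZ R d T P tm tb tmsg tcut M1 M2 Mb < +oo.
Proof.
set K := (tm + tb + tcut + tmsg)%N.
have m1 k : measurable (M1 @^-1` [set k]) by exact: (hM L1).
have m2 k : measurable (M2 @^-1` [set k]) by exact: (hM L2).
have mb k : measurable (Mb @^-1` [set k]) by exact: (hM Lb).
apply: (@le_lt_trans _ _ (\int[P]_x (K%:R%:E * ((M1 x)%:R%:E + (M2 x)%:R%:E + (Mb x)%:R%:E + 1)))).
  rewrite /IZ; apply: (@ge0_le_integral _ _ _ P setT measurableT); last first.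
  - move=> x _; rewrite -!EFinD -EFinM lee_fin -!natrD natr1 -natrM ler_nat -addn1.
    exact: (Zn_bound tm tb tmsg tcut (tri x)).
  - exact: (mnat' (fun t => (K%:R)%:E * ((t.1.1%:R)%:E + (t.1.2%:R)%:E + (t.2%:R)%:E + 1))).
  - exact: (mnat' (fun t => ((Zn tm tb tmsg tcut t)%:R)%:E)).
  - by move=> x _; exact: natE_ge0.
rewrite (@ge0_integralZl_EFin _ _ _ P setT measurableT); last 3 first.
- by move=> x _; rewrite -!EFinD lee_fin -!natrD natr1 ler0n.
- exact: (mnat' (fun t => ((t.1.1%:R)%:E + (t.1.2%:R)%:E + (t.2%:R)%:E + 1))).
- exact: ler0n.
apply: lte_mul_pinfty; [exact: natE_ge0|by []|].
rewrite (@ge0_integralD _ _ _ P setT measurableT); last 4 first.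
- by move=> x _; rewrite -!EFinD lee_fin -!natrD ler0n.
- exact: (mnat' (fun t => ((t.1.1%:R)%:E + (t.1.2%:R)%:E + (t.2%:R)%:E))).
- by move=> x _; rewrite lee_fin.
- exact: measurable_cst.
rewrite (@ge0_integralD _ _ _ P setT measurableT); last 4 first.
- by move=> x _; rewrite -!EFinD lee_fin -!natrD ler0n.
- exact: (mnat' (fun t => ((t.1.1%:R)%:E + (t.1.2%:R)%:E))).
- by move=> x _; exact: natE_ge0.
- exact: (mnat' (fun t => ((t.2%:R)%:E))).
rewrite (@ge0_integralD _ _ _ P setT measurableT); last 4 first.
- by move=> x _; exact: natE_ge0.
- exact: (mnat' (fun t => ((t.1.1%:R)%:E))).
- by move=> x _; exact: natE_ge0.
- exact: (mnat' (fun t => ((t.1.2%:R)%:E))).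
apply: lte_add_pinfty; last first.
  rewrite (_ : (fun _ => 1) = cst 1) // integral_cst // mul1e.
  exact: (le_lt_trans (probability_le1 P measurableT) (ltry _)).
apply: lte_add_pinfty; last exact: (@mean_fin R d T P Mb pb mb pb01 hgb).
apply: lte_add_pinfty; [exact: (@mean_fin R d T P M1 pm m1 pm01 hg1)|exact: (@mean_fin R d T P M2 pm m2 pm01 hg2)].
Qed.

End KS.

Lemma prod_const_seq (R : realType) (s : seq nat) (F : nat -> \bar R) (c : R) :
  (forall k, k \in s -> F k = c%:E) -> (\prod_(k <- s) F k = (c ^+ size s)%:E)%E.
Proof.
elim: s => [|k s IH] h; first by rewrite big_nil expr0.
rewrite big_cons IH; last by move=> j js; apply: h; rewrite inE js orbT.
by rewrite h ?mem_head // exprS.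
Qed.

Lemma geom_eseries (R : realType) (q : R) : 0 <= q < 1 ->
  (\sum_(i <oo) (q ^+ i)%:E = ((1 - q)^-1)%:E)%E.
Proof.
move=> /andP[q0 q1].
apply: cvg_lim => //.
rewrite (_ : (fun n => \sum_(0 <= i < n) (q ^+ i)%:E)%E = (fun n => (series (geometric 1 q) n)%:E)); last first.
  by apply/funext => n; rewrite sumEFin /series /=; congr (_%:E); apply: eq_bigr => i _; rewrite mul1r.
apply: cvg_EFin; first exact: nearW.
rewrite -[X in _ --> X]mul1r.
by apply: cvg_geometric_series; rewrite ger0_norm.
Qed.

Section P1.
Context (R : realType) (d : measure_display) (T : measurableType d) (P : probability T R).
Context (C : nat -> T -> nat * nat) (W : T -> nat * nat).
Hypothesis hC : forall (i : nat) (v : nat * nat), measurable (C i @^-1` [set v]).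
Hypothesis hIC : mutually_independent P C.
Hypothesis hD : forall (i : nat) (B : set (nat * nat)), P (C i @^-1` B) = P (W @^-1` B).
Hypothesis mW : forall B, measurable (W @^-1` B).
Context (q e : R).
Hypothesis q01 : 0 <= q < 1.
Hypothesis hq : P (W @^-1` [set v | v.1 = 0%N]) = q%:E.
Hypothesis he : (\int[P]_x (((W x).2)%:R)%:E = e%:E)%E.
Local Open Scope ereal_scope.

Lemma mCpre i (B : set (nat * nat)) : measurable (C i @^-1` B).
Proof.
have -> : C i @^-1` B = \bigcup_a \bigcup_b (C i @^-1` [set (a, b)] `&` [set _ | B (a, b)]).
  apply/seteqP; split => x /=.
    by move=> Bx; exists (C i x).1 => //; exists (C i x).2 => //=; rewrite -surjective_pairing.
  by move=> [a _ [b _ [/= -> ]]].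
apply: bigcupT_measurable => a; apply: bigcupT_measurable => b.
by apply: measurableI; [exact: hC|exact: mcst_set].
Qed.

Definition allz i x := all (fun k => (C k x).1 == 0%N) (iota 0 i).
Arguments allz : simpl never.
Lemma allzS i x : allz i.+1 x = allz i x && ((C i x).1 == 0%N).
Proof. by rewrite /allz -addn1 iotaD all_cat /= andbT. Qed.
Definition Aset i := [set x | allz i x].

Lemma mAset i : measurable (Aset i).
Proof.
elim: i => [|i IH]; first exact: (@mcst_set d T (is_true true)).
have -> : Aset i.+1 = Aset i `&` C i @^-1` [set v | v.1 = 0%N].
  apply/seteqP; split => x; rewrite /Aset /= allzS.
    by move=> /andP[-> /eqP].
  by move=> [-> /= ->].
by apply: measurableI => //; exact: mCpre.
Qed.

Lemma inAset i x : (x \in Aset i) = allz i x.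
Proof. by apply/idP/idP; rewrite in_setE. Qed.

Definition gC i x : \bar R := (((C i x).2)%:R)%:E.

Lemma fE i : (fun x => (if all (fun k => (C k x).1 == 0%N) (iota 0 i)
      then (((C i x).2)%:R : R) else 0)%:E) = gC i \_ (Aset i).
Proof.
apply/funext => x; rewrite /patch inAset /allz.
by case: ifP.
Qed.

Lemma mgC i (D : set T) : measurable D -> measurable_fun D (gC i).
Proof.
move=> mD _ Y mY; apply: measurableI => //.
exact: (mCpre i [set v | Y (((v.2)%:R)%:E)]).
Qed.

Lemma EW_series : \int[P]_x (((W x).2)%:R)%:E =
  \sum_(z <oo) (z%:R)%:E * P (W @^-1` [set v | v.2 = z]).
Proof.
have mW2 k : measurable ((fun x => (W x).2) @^-1` [set k]) by exact: (mW [set v | v.2 = k]).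
rewrite (@integral_part R d T P (fun x => (W x).2) setT _ mW2 measurableT); last 2 first.
- exact: (@mfun_nat R d T (fun x => (W x).2) (fun n => (n%:R)%:E) setT mW2 measurableT).
- by move=> x _; exact: natE_ge0.
apply: eq_eseriesr => z _.
rewrite (eq_integral (cst (z%:R)%:E)); last first.
  by move=> x; rewrite in_setE => -[_ /= ->].
rewrite integral_cst; last exact: measurableI.
by rewrite setTI.
Qed.

Lemma indepA i z : P (Aset i `&` (fun x => (C i x).2) @^-1` [set z]) =
   (q ^+ i)%:E * P (W @^-1` [set v | v.2 = z]).
Proof.
pose B k : set (nat * nat) := if (k < i)%N then [set v | v.1 = 0%N] else [set v | v.2 = z].
have := hIC (iota 0 i.+1) B (iota_uniq 0 i.+1).
have -> : \bigcap_(k in [set` iota 0 i.+1]) (C k @^-1` B k) =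
          Aset i `&` (fun x => (C i x).2) @^-1` [set z].
  apply/seteqP; split => x /=.
    move=> H; split.
      rewrite /allz; apply/allP => k; rewrite mem_iota /= => hk.
      have hk' : k \in iota 0 i.+1 by rewrite mem_iota /= ltnS (ltnW hk).
      have := H k hk'; rewrite /B hk => h; exact/eqP.
    have hi : i \in iota 0 i.+1 by rewrite mem_iota /= ltnS leqnn.
    by have := H i hi; rewrite /B ltnn.
  move=> [Ha Hz] k hk0; move: Ha; rewrite /allz => /allP Ha.
  have hk : (k \in iota 0 i.+1) := hk0.
  move: hk; rewrite mem_iota /= ltnS => hk; rewrite /B.
  case: ifP => hki.
    by apply/eqP; apply: Ha; rewrite mem_iota /= hki.
  by have -> : k = i by apply/eqP; rewrite eqn_leq hk leqNgt hki.
move=> ->.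
rewrite -addn1 iotaD big_cat /= big_seq1 /B ltnn hD.
rewrite (@prod_const_seq R (iota 0 i) (fun k => P (C k @^-1` (if (k < i)%N then [set v | v.1 = 0%N] else [set v | v.2 = z]))) q); last first.
  by move=> k; rewrite mem_iota /= => hk; rewrite hk hD hq.
by rewrite size_iota.
Qed.

Lemma int_f i : \int[P]_x (if all (fun k => (C k x).1 == 0%N) (iota 0 i)
      then (((C i x).2)%:R : R) else 0)%:E = (q ^+ i)%:E * e%:E.
Proof.
rewrite (fE i) -integral_mkcond.
have mC2 k : measurable ((fun x => (C i x).2) @^-1` [set k]) by exact: (mCpre i [set v | v.2 = k]).
rewrite (@integral_part R d T P (fun x => (C i x).2) (Aset i) _ mC2 (mAset i) (mgC i _ (mAset i))); last first.
  by move=> x _; exact: natE_ge0.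
rewrite -he EW_series -nneseriesZl; last first.
  by move=> z _; apply: mule_ge0; [exact: natE_ge0|exact: measure_ge0].
apply: eq_eseriesr => z _.
rewrite (eq_integral (cst (z%:R)%:E)); last first.
  by move=> x; rewrite in_setE => -[_ /= <-].
rewrite integral_cst; last by apply: measurableI; [exact: mAset|exact: mC2].
by rewrite muleCA; congr (_ * _); exact: indepA.
Qed.

Lemma part1 : \int[P]_x Xe2e C x = e%:E * ((1 - q)^-1)%:E.
Proof.
rewrite /Xe2e integral_nneseries; last 3 first.
- exact: measurableT.
- move=> n; rewrite (fE n); apply: (proj1 (measurable_restrictT (gC n) (mAset n))).
  exact: (mgC n _ (mAset n)).
- by move=> n x _; case: ifP => _; [exact: natE_ge0|by []].
under eq_eseriesr do rewrite int_f muleC.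
rewrite nneseriesZl; last by move=> i _; rewrite lee_fin; apply: exprn_ge0; case/andP: q01.
by rewrite geom_eseries.
Qed.

End P1.

Lemma EZ_J (R : realType) (d : measure_display) (T : measurableType d) (P : probability T R)
  (tm tb tmsg tcut : nat) (M1 M2 Mb : T -> nat) (B : set (nat * nat * nat)) :
  EZ P (Zof tcut tmsg (Xof tm tb M1 M2 Mb)) (tri d T M1 M2 Mb @^-1` B) =
  J R d T P tm tb tmsg tcut M1 M2 Mb B.
Proof.
rewrite /EZ /J integral_mkcond; apply: eq_integral => x _.
rewrite /patch.
have -> : (x \in tri d T M1 M2 Mb @^-1` B) = (tri d T M1 M2 Mb x \in B).
  by apply/idP/idP; rewrite !in_setE.
by case: (tri d T M1 M2 Mb x \in B); rewrite ?mul1n ?mul0n.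
Qed.

Theorem mainTheorem1 (R : realType) (d : measure_display) (T : measurableType d)
  (P : probability T R)
  (tm tb tmsg tcut : nat) (pm pb : R)
  (M1 M2 Mb : T -> nat) (C : nat -> T -> nat * nat) :
  (1 <= tm)%N -> (1 <= tb)%N -> (maxn tm (maxn tb tmsg) < tcut)%N ->
  0 < pm < 1 -> 0 < pb < 1 ->
  (forall (l : link) (v : nat), measurable (Mof M1 M2 Mb l @^-1` [set v])) ->
  mutually_independent P (Mof M1 M2 Mb) ->
  (forall j : nat, (0 < j)%N ->
     P (M1 @^-1` [set j]) = (pm * (1 - pm) ^+ j.-1)%:E /\
     P (M2 @^-1` [set j]) = (pm * (1 - pm) ^+ j.-1)%:E /\
     P (Mb @^-1` [set j]) = (pb * (1 - pb) ^+ j.-1)%:E) ->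
  (forall (i : nat) (v : nat * nat), measurable (C i @^-1` [set v])) ->
  mutually_independent P C ->
  (forall (i : nat) (B : set (nat * nat)),
     P (C i @^-1` B) =
     P ((fun x => (Yof tcut (Xof tm tb M1 M2 Mb) x,
                   Zof tcut tmsg (Xof tm tb M1 M2 Mb) x)) @^-1` B)) ->
  let X := Xof tm tb M1 M2 Mb in
  let Y := Yof tcut X in
  let Z := Zof tcut tmsg X in
  let p := fine (P [set x | Y x = 1%N]) in
  let E := EZ P Z in
  let Ap := Aplus tcut X in
  let Am := Aminus tcut X in
  let Am2 := Aminus2 tcut X in
  ((\int[P]_x Xe2e C x
     = (E [set x | Y x = 0%N] + E [set x | Y x = 1%N]) * (p^-1)%:E)%E /\
   (E [set x | Y x = 1%N]
     = 2%:E * E (Ap L1) + E (Ap Lb) - E (Ap L1 `&` Ap L2)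
       - 2%:E * E (Ap L1 `&` Ap Lb) + E (Ap L1 `&` Ap L2 `&` Ap Lb))%E /\
   (E [set x | Y x = 0%N]
     = 2%:E * (E (Am2 L1 L2) + E (Am2 L1 Lb) + E (Am2 Lb L1))
       - 2%:E * E (Am2 L1 L2 `&` Am2 L1 Lb) - E (Am2 Lb L1 `&` Am2 Lb L2)
       - E (Am L1 `&` Am L2) - 2%:E * E (Am L1 `&` Am Lb))%E).
Proof.
move=> htm htb htc pm01 pb01 hM hI hgeom hC hIC hD X Y Z p E Ap Am Am2.
have hg1 j (j0 : (0 < j)%N) := (hgeom j j0).1.
have hg2 j (j0 : (0 < j)%N) := (hgeom j j0).2.1.
have hgb j (j0 : (0 < j)%N) := (hgeom j j0).2.2.
have mf1 k : measurable (M1 @^-1` [set k]) by exact: (hM L1).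
have mf2 k : measurable (M2 @^-1` [set k]) by exact: (hM L2).
have m12 a : P (M1 @^-1` [set a]) = P (M2 @^-1` [set a]).
  case: a => [|a].
    by apply: (@fib0_eq R d T P M1 M2 mf1 mf2) => k k0; rewrite hg1 // hg2.
  by rewrite hg1 // hg2.
have htc0 : (0 < tcut)%N by lia.
have hZ := @IZ_fin R d T P tm tb tmsg tcut M1 M2 Mb hM pm pb pm01 pb01 hg1 hg2 hgb.
pose JJ := J R d T P tm tb tmsg tcut M1 M2 Mb.
have e := @EZ_J R d T P tm tb tmsg tcut M1 M2 Mb.
pose X3' := X3 tm tb.
have eY1 : E [set x | Y x = 1%N] = JJ (Y1s tm tb tcut) := e _.
have eY0 : E [set x | Y x = 0%N] = JJ (Y0s tm tb tcut) := e _.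
split; [|split].
- pose W := fun x => (Yof tcut (Xof tm tb M1 M2 Mb) x, Zof tcut tmsg (Xof tm tb M1 M2 Mb) x).
  have mW B : measurable (W @^-1` B).
    exact: (@mtri d T M1 M2 Mb hM ((fun t => (Yof tcut X3' t, Zn tm tb tmsg tcut t)) @^-1` B)).
  have mY1 : measurable [set x | Y x = 1%N] := @mtri d T M1 M2 Mb hM (Y1s tm tb tcut).
  have mY0 : measurable [set x | Y x = 0%N] := @mtri d T M1 M2 Mb hM (Y0s tm tb tcut).
  have hp : P [set x | Y x = 1%N] = p%:E.
    by rewrite /p fineK //; exact: (fin_num_measure P _ mY1).
  have hsum : (P [set x | Y x = 0%N] + P [set x | Y x = 1%N] = 1)%E.
    rewrite -(probability_setT P) -measureU //; last first.
      by apply/seteqP; split => x // [/= ->].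
    congr (P _); apply/seteqP; split => x //= _.
    by rewrite /Y /Yof; case: ifP => _; [right|left].
  have [a Ea] : exists a : R, P [set x | Y x = 0%N] = a%:E.
    exists (fine (P [set x | Y x = 0%N])); rewrite fineK //.
    exact: (fin_num_measure P _ mY0).
  rewrite Ea hp in hsum; have {}hsum : a + p = 1 by apply: EFin_inj; rewrite EFinD; exact: hsum.
  have p1 : p <= 1.
    have := probability_le1 P mY1; rewrite hp lee_fin; exact.
  have p0 : 0 < p.
    have m3 : measurable (M1 @^-1` [set 1%N] `&` M2 @^-1` [set 1%N] `&` Mb @^-1` [set 1%N]).
      by apply: measurableI; [apply: measurableI|exact: (hM Lb)].
    have sub : M1 @^-1` [set 1%N] `&` M2 @^-1` [set 1%N] `&` Mb @^-1` [set 1%N] `<=` [set x | Y x = 1%N].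
      move=> x [[/= h1 h2] h3]; rewrite /Y /Yof /X /Xmax /Xmin /Xof h1 h2 h3 ifT //; lia.
    have h0 : (P (M1 @^-1` [set 1%N] `&` M2 @^-1` [set 1%N] `&` Mb @^-1` [set 1%N])
      <= P [set x | Y x = 1%N])%E := le_measure P (mem_set m3) (mem_set mY1) sub.
    move: h0; rewrite (@indep3 R d T P M1 M2 Mb hI) /m1 /m2 /mb hg1 // hg2 // hgb // hp.
    rewrite /= !expr0 !mulr1 lee_fin => h.
    apply: (lt_le_trans _ h); apply: mulr_gt0; [apply: mulr_gt0|]; lra.
  have q01 : 0 <= 1 - p < 1 by apply/andP; split; lra.
  have hq : P (W @^-1` [set v | v.1 = 0%N]) = (1 - p)%:E.
    have -> : 1 - p = a by lra.
    exact: Ea.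
  have IZf : @IZ R d T P tm tb tmsg tcut M1 M2 Mb \is a fin_num.
    rewrite ge0_fin_numE ?hZ //; apply: integral_ge0 => x _; exact: natE_ge0.
  have he : (\int[P]_x ((W x).2%:R)%:E = (fine (@IZ R d T P tm tb tmsg tcut M1 M2 Mb))%:E)%E.
    by rewrite fineK.
  have P1 := @part1 R d T P C W hC hIC hD mW (1 - p) _ q01 hq he.
  rewrite P1 eY0 eY1.
  have -> : 1 - (1 - p) = p by ring.
  congr (_ * _)%E.
  have := @Jsum R d T P tm tb tmsg tcut M1 M2 Mb hM [:: Y0s tm tb tcut; Y1s tm tb tcut].
  rewrite !big_cons big_nil adde0 => ->.
  rewrite fineK //; apply: eq_integral => x _; congr (_%:R)%:E.
  rewrite /G !big_cons big_nil /Y0s /Y1s inY0 inY1 addn0.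
  by case: (_ < tcut)%N; rewrite /= ?mul1n ?mul0n ?addn0.
- have eA1 : E (Ap L1) = JJ (Aplus tcut X3' L1) := e _.
  have eAb : E (Ap Lb) = JJ (Aplus tcut X3' Lb) := e _.
  have eA12 : E (Ap L1 `&` Ap L2) = JJ (Aplus tcut X3' L1 `&` Aplus tcut X3' L2) := e _.
  have eA1b : E (Ap L1 `&` Ap Lb) = JJ (Aplus tcut X3' L1 `&` Aplus tcut X3' Lb) := e _.
  have eA12b : E (Ap L1 `&` Ap L2 `&` Ap Lb) =
    JJ (Aplus tcut X3' L1 `&` Aplus tcut X3' L2 `&` Aplus tcut X3' Lb) := e _.
  rewrite eY1 eA1 eAb eA12 eA1b eA12b.
  exact: (@part2 R d T P tm tb tmsg tcut M1 M2 Mb hM hI m12 hZ).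
- have e12 : E (Am2 L1 L2) = JJ (Aminus2 tcut X3' L1 L2) := e _.
  have e1b : E (Am2 L1 Lb) = JJ (Aminus2 tcut X3' L1 Lb) := e _.
  have eb1 : E (Am2 Lb L1) = JJ (Aminus2 tcut X3' Lb L1) := e _.
  have e121b : E (Am2 L1 L2 `&` Am2 L1 Lb) =
    JJ (Aminus2 tcut X3' L1 L2 `&` Aminus2 tcut X3' L1 Lb) := e _.
  have eb1b2 : E (Am2 Lb L1 `&` Am2 Lb L2) =
    JJ (Aminus2 tcut X3' Lb L1 `&` Aminus2 tcut X3' Lb L2) := e _.
  have em12 : E (Am L1 `&` Am L2) = JJ (Aminus tcut X3' L1 `&` Aminus tcut X3' L2) := e _.
  have em1b : E (Am L1 `&` Am Lb) = JJ (Aminus tcut X3' L1 `&` Aminus tcut X3' Lb) := e _.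
  rewrite eY0 e12 e1b eb1 e121b eb1b2 em12 em1b.
  exact: (@part3 R d T P tm tb tmsg tcut M1 M2 Mb hM hI m12 hZ htc0).
Qed.
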